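(* Let $G=(L,R,E)$ be a bipartite graph, $f:2^E\to\mathbb{R}_{\ge0}$ non-negative, monotonically non-decreasing and submodular, $p\in(0,1)$, and let $M$ be the set produced by $\mathrm{SIMULATE2}$ (see context). Then $\mathbb{E}[f(M)]\ge\frac p3\cdot\mathrm{OPT}$, where $\mathrm{OPT}=\max\{f(T):T\subseteq E\text{ a matching}\}$.
   Context: $f_M(e)=f(M\cup\{e\})-f(M)$. $\mathrm{SIMULATE2}$: start with $M=N=\emptyset$ and a working copy of $E$. While there is an edge $e^*=(\ell^*,r^* )$ in the working edge set such that $M\cup\{e^*\}$ is a matching, take such an edge maximizing $f_M(e^* )$ (fixed tie-breaking); flip an independent coin with head probability $p$; on heads add $e^*$ to $M$, otherwise add $e^*$ to $N$; then remove all edges incident to $\ell^*$ from the working edge set. Finally let $S$ be the set of edges $(\ell,r)\in N$ that are the only edge of $N$ incident to $r$. *)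

(* Defs.v *)
From mathcomp Require Import all_boot all_order all_algebra.
From mathcomp Require Import reals.
Set Implicit Arguments. Unset Strict Implicit. Unset Printing Implicit Defensive.
Import Order.TTheory GRing.Theory Num.Theory.
Local Open Scope ring_scope.

Section Simulate2.
Variables (L Rv E : finType) (lft : E -> L) (rgt : E -> Rv).

Definition is_matching (M : {set E}) : bool :=
  [forall e in M, forall e' in M,
     (e != e') ==> ((lft e != lft e') && (rgt e != rgt e'))].

Variable R : realType.
Variable f : {set E} -> R.

Definition marg (M : {set E}) (e : E) : R := f (e |: M) - f M.

(* A fixed (deterministic) tie-breaking selector: given the current M and the
   nonempty set C of candidate edges, it returns an element of C maximizing f_M. *)
Definition greedy_selector (sel : {set E} -> {set E} -> E) : Prop :=
  forall M C : {set E}, C != set0 ->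
    sel M C \in C /\ (forall e, e \in C -> marg M e <= marg M (sel M C)).

Variables (sel : {set E} -> {set E} -> E) (p : R).

(* Expected value of f(M_final) for SIMULATE2 started in state (M, W),
   W the working edge set; the fuel n bounds the number of iterations
   (each iteration removes at least the chosen edge from W). The coin
   outcome only decides whether e* goes to M (prob. p) or to N (prob 1-p);
   N does not influence M's evolution, so it is not tracked. *)
Fixpoint sim2_exp (n : nat) (M W : {set E}) : R :=
  match n with
  | 0 => f M
  | n'.+1 =>
    let C := [set e in W | is_matching (e |: M)] in
    if C == set0 then f M else
    let e := sel M C in
    let W' := [set e' in W | lft e' != lft e] in
    p * sim2_exp n' (e |: M) W' + (1 - p) * sim2_exp n' M W'
  end.

Definition simulate2_expected_value : R :=
  sim2_exp #|E|.+1 set0 [set: E].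

End Simulate2.

(* Main.v *)
Require Import Defs.
From mathcomp Require Import all_boot all_order all_algebra.
From mathcomp Require Import reals.
From mathcomp Require Import lra.
Import Order.TTheory GRing.Theory Num.Theory.
Local Open Scope ring_scope.

Section Aux.
Variables (L Rv E : finType) (lft : E -> L) (rgt : E -> Rv)
  (R : realType) (f : {set E} -> R)
  (sel : {set E} -> {set E} -> E) (p : R).
Hypotheses (fpos : forall A : {set E}, 0 <= f A)
  (fmono : forall A B : {set E}, A \subset B -> f A <= f B)
  (fsub : forall A B : {set E}, f (A :|: B) + f (A :&: B) <= f A + f B)
  (hp : 0 < p < 1) (hsel : greedy_selector f sel).
Variable T : {set E}.
Hypothesis hT : is_matching lft rgt T.

Lemma matchingP (S : {set E}) : reflect (forall a b, a \in S -> b \in S -> a != b ->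
   (lft a != lft b) && (rgt a != rgt b)) (is_matching lft rgt S).
Proof.
apply: (iffP forall_inP) => H.
- move=> a b aS bS; exact: (implyP (forall_inP (H a aS) b bS)).
- move=> a aS; apply/forall_inP => b bS; apply/implyP; exact: H.
Qed.

Lemma match_add2 t e M : is_matching lft rgt (t |: M) -> is_matching lft rgt (e |: M) ->
  lft t != lft e -> rgt t != rgt e -> is_matching lft rgt (t |: (e |: M)).
Proof.
move=> /matchingP Ht /matchingP He hl hr.
apply/matchingP => a b; rewrite !inE.
move=> /or3P [/eqP->|/eqP->|aM] /or3P [/eqP->|/eqP->|bM] ab.
- by rewrite eqxx in ab.
- by rewrite hl hr.
- by apply: Ht => //; rewrite !inE ?eqxx ?bM ?orbT.
- by rewrite (eq_sym (lft e)) (eq_sym (rgt e)) hl hr.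
- by rewrite eqxx in ab.
- by apply: He => //; rewrite !inE ?eqxx ?bM ?orbT.
- by apply: Ht => //; rewrite !inE ?eqxx ?aM ?orbT.
- by apply: He => //; rewrite !inE ?eqxx ?aM ?orbT.
- by apply: Ht => //; rewrite !inE ?aM ?bM ?orbT.
Qed.

Lemma sub_marg M B t : f (M :|: (t |: B)) <= f (M :|: B) + marg f M t.
Proof.
have := fsub (t |: M) (M :|: B).
have -> : (t |: M) :|: (M :|: B) = M :|: (t |: B).
  by apply/setP => x; rewrite !inE; case: (x == t); case: (x \in M); case: (x \in B).
have : f M <= f ((t |: M) :&: (M :|: B)).
  by apply: fmono; apply/subsetP => x xM; rewrite !inE xM !orbT.
rewrite /marg; lra.
Qed.

Lemma drop_one M (A : {set E}) g (P : pred E) :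
  (forall t, t \in A -> P t -> marg f M t <= g) -> 0 <= g ->
  (forall t t', t \in A -> t' \in A -> P t -> P t' -> t = t') ->
  f (M :|: A) <= f (M :|: [set t in A | ~~ P t]) + g.
Proof.
move=> Hg g0 Hu.
case: (pickP [pred t in A | P t]) => [t /andP [tA Pt] | none].
- have sub : A \subset t |: [set u in A | ~~ P u].
    apply/subsetP => u uA; rewrite !inE uA /=.
    case Pu: (P u); last by rewrite orbT.
    by rewrite (Hu u t uA tA Pu Pt) eqxx.
  apply: (le_trans (fmono _ _ (setUS M sub))).
  apply: (le_trans (sub_marg _ _ _)).
  have := Hg t tA Pt; lra.
- have -> : [set t in A | ~~ P t] = A.
    apply/setP => u; rewrite inE; case uA: (u \in A) => //.
    by move: (none u); rewrite /= uA /= => ->.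
  lra.
Qed.

Lemma main n : forall M W A : {set E}, (#|W| < n)%N -> A \subset T ->
  (forall t, t \in A -> (t \in W) && is_matching lft rgt (t |: M)) ->
  (1 - p/3) * f M + p/3 * f (M :|: A) <= sim2_exp lft rgt f sel p n M W.
Proof.
elim: n => [|n IH] M W A hW hAT hA /=; first by rewrite ltn0 in hW.
set C := [set e in W | is_matching lft rgt (e |: M)].
have AC : A \subset C.
  by apply/subsetP => t tA; rewrite inE; exact: hA.
case: ifP => hC.
  have -> : A = set0 by apply/eqP; rewrite -subset0 -(eqP hC).
  rewrite setU0; lra.
have [eC emax] := hsel M C (negbT hC).
set e := sel M C in eC emax *.
set W' := [set e' in W | lft e' != lft e].
set A0 := [set t in A | ~~ (lft t == lft e)].
set A1 := [set t in A0 | ~~ (rgt t == rgt e)].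
move: eC; rewrite inE => /andP [eW eM].
have hW' : (#|W'| < n)%N.
  have : W' \proper W.
    apply/properP; split; first by apply/subsetP => x; rewrite inE => /andP [].
    by exists e => //; rewrite inE eqxx andbF.
  move/proper_card; rewrite -ltnS; move=> h; exact: leq_trans h hW.
have A0A : A0 \subset A by apply/subsetP => x; rewrite inE => /andP [].
have A1A0 : A1 \subset A0 by apply/subsetP => x; rewrite inE => /andP [].
have IH0 := IH M W' A0 hW' (subset_trans A0A hAT).
have IH1 := IH (e |: M) W' A1 hW' (subset_trans A1A0 (subset_trans A0A hAT)).
have uniqT : forall t t', t \in A -> t' \in A -> t != t' ->
    (lft t != lft t') && (rgt t != rgt t').
  move=> t t' tA t'A; exact: (elimT (matchingP T) hT t t' (subsetP hAT _ tA) (subsetP hAT _ t'A)).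
have g0 : 0 <= marg f M e by rewrite /marg subr_ge0; apply: fmono; exact: subsetUr.
have margA : forall t, t \in A -> marg f M t <= marg f M e.
  by move=> t tA; apply: emax; exact: (subsetP AC).
have HA : f (M :|: A) <= f (M :|: A0) + marg f M e.
  apply: drop_one => //; first by move=> t tA _; exact: margA.
  move=> t t' tA t'A /eqP l1 /eqP l2; apply/eqP; apply: contraT => ne.
  by have := uniqT t t' tA t'A ne; rewrite l1 l2 eqxx.
have H0 : f (M :|: A0) <= f (M :|: A1) + marg f M e.
  apply: drop_one => //; first by move=> t tA _; apply: margA; exact: (subsetP A0A).
  move=> t t' tA t'A /eqP l1 /eqP l2; apply/eqP; apply: contraT => ne.
  by have := uniqT t t' (subsetP A0A _ tA) (subsetP A0A _ t'A) ne; rewrite l1 l2 eqxx andbF.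
have H1 : f (M :|: A1) <= f ((e |: M) :|: A1).
  by apply: fmono; apply: setSU; exact: subsetUr.
have I0 : (1 - p/3) * f M + p/3 * f (M :|: A0) <= sim2_exp lft rgt f sel p n M W'.
  apply: IH0 => t; rewrite inE => /andP [tA nl]; have /andP [tW tM] := hA t tA.
  by rewrite inE tW nl.
have I1 : (1 - p/3) * f (e |: M) + p/3 * f ((e |: M) :|: A1)
    <= sim2_exp lft rgt f sel p n (e |: M) W'.
  apply: IH1 => t; rewrite !inE => /andP [/andP [tA nl] nr]; have /andP [tW tM] := hA t tA.
  rewrite tW nl /=; exact: match_add2.
move: I0 I1 HA H0 H1 g0; rewrite /marg.
set a := sim2_exp _ _ _ _ _ _ _ _; set b := sim2_exp _ _ _ _ _ _ _ _.
move: hp => /andP [p0 p1].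
move: (f M) (f (e |: M)) (f (M :|: A)) (f (M :|: A0)) (f (M :|: A1)) (f (e |: M :|: A1)) => x y z u v w I0 I1 HA H0 H1 g0.
have q1 : 0 <= 1 - p by lra.
have h1 : 0 <= p * (b - ((1 - p/3) * y + p/3 * w)) by apply: mulr_ge0; lra.
have h2 : 0 <= (1 - p) * (a - ((1 - p/3) * x + p/3 * u)) by apply: mulr_ge0; lra.
have h3 : 0 <= p * (p * (w + (y - x) - u)) by apply: mulr_ge0; [lra|apply: mulr_ge0; lra].
have h5 : 0 <= p * (u + (y - x) - z) by apply: mulr_ge0; lra.
have h4 : 0 <= p * (1 - p) * (y - x) by apply: mulr_ge0 => //; apply: mulr_ge0; lra.
lra.
Qed.

End Aux.

Theorem lemma10 (L Rv E : finType) (lft : E -> L) (rgt : E -> Rv)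
  (R : realType) (f : {set E} -> R)
  (sel : {set E} -> {set E} -> E) (p : R) :
  injective (fun e => (lft e, rgt e)) ->
  (forall A : {set E}, 0 <= f A) ->
  (forall A B : {set E}, A \subset B -> f A <= f B) ->
  (forall A B : {set E}, f (A :|: B) + f (A :&: B) <= f A + f B) ->
  0 < p < 1 ->
  greedy_selector f sel ->
  forall T : {set E}, is_matching lft rgt T ->
    p / 3 * f T <= simulate2_expected_value lft rgt f sel p.
Proof.
move=> _ fpos fmono fsub hp hsel T hT.
have hc : (#|[set: E]| < #|E|.+1)%N by rewrite cardsT.
have := @main L Rv E lft rgt R f sel p fmono fsub hp hsel T hT #|E|.+1 set0 [set: E] T hc (subxx T).
rewrite /simulate2_expected_value set0U => H.
apply: le_trans (H _); last first.
  move=> t tT; rewrite inE /= setU0; apply/forall_inP => a; rewrite inE => /eqP ->.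
  by apply/forall_inP => b; rewrite inE => /eqP ->; rewrite eqxx.
have := fpos set0; move: hp => /andP [p0 p1]; nra.
Qed.
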